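(* Let $d\ge 1$ and let $B$ be a $d\times d$ integral matrix with $|\det(B)|=2$. Then $B$ is integrally similar to a $d\times d$ integral matrix $A$ with the following properties: (1) $A\mathbb{Z}^d=A^\tau\mathbb{Z}^d$; (2) there exists $\vec{\ell}_A\in\mathbb{Z}^d$ such that $\mathbb{Z}^d=(\vec{\ell}_A+A\mathbb{Z}^d)\,\dot\cup\, A\mathbb{Z}^d$ (disjoint union); (3) there exists $\vec{q}_A\in\mathbb{Z}^d$ such that $\vec{q}_A\circ A\mathbb{Z}^d\subseteq 2\mathbb{Z}$ and $\vec{q}_A\circ(\vec{\ell}_A+A\mathbb{Z}^d)\subseteq 2\mathbb{Z}+1$; (4) for every $\vec m\in A\mathbb{Z}^d$ and every $\vec n\in\mathbb{Z}^d$, $\mathbb{Z}^d=(\vec n-A\mathbb{Z}^d)\,\dot\cup\,(\vec{\ell}_A-\vec m-\vec n+A\mathbb{Z}^d)$; (5) for every $\vec m\in\vec{\ell}_A+A\mathbb{Z}^d$ and every $\vec n\in\mathbb{Z}^d$, $\vec n-A\mathbb{Z}^d=\vec{\ell}_A-\vec m-\vec n+A\mathbb{Z}^d$.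
   Context: $A^\tau$ denotes the transpose of $A$. For $\vec x,\vec y\in\mathbb{C}^d$, $\vec x\circ\vec y=\sum_{j=1}^d x_j\overline{y_j}$; for a set $X$ of vectors, $\vec q\circ X=\{\vec q\circ\vec x:\vec x\in X\}$. An integral matrix $B$ is integrally similar to an integral matrix $C$ if $C=SBS^{-1}$ for some integral matrix $S$ whose inverse $S^{-1}$ is also integral. $\dot\cup$ denotes disjoint union. *)

(* Defs.v *)
From HB Require Import structures.
From mathcomp Require Import all_boot all_order all_algebra.
Set Implicit Arguments.
Unset Strict Implicit.
Unset Printing Implicit Defensive.
Import Order.TTheory GRing.Theory Num.Theory.
Local Open Scope ring_scope.

(* B is integrally similar to A: A = S B S^{-1} with S integral and S^{-1}
   integral, i.e. S is a unit of the matrix ring over int. *)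
Definition int_similar (d : nat) (B A : 'M[int]_d) : Prop :=
  exists S : 'M[int]_d, S \in unitmx /\ A = S *m B *m invmx S.

Definition inLat (d : nat) (A : 'M[int]_d) (v : 'cV[int]_d) : Prop :=
  exists x : 'cV[int]_d, v = A *m x.

(* x o y = sum_j x_j * conj(y_j); on integer vectors conj is the identity *)
Definition dotz (d : nat) (x y : 'cV[int]_d) : int :=
  \sum_(j < d) x j 0 * y j 0.

Definition disj_cover (d : nat) (X Y : 'cV[int]_d -> Prop) : Prop :=
  forall v : 'cV[int]_d, (X v \/ Y v) /\ ~ (X v /\ Y v).

(* Main.v *)
Require Import Defs.
From HB Require Import structures.
From mathcomp Require Import all_boot all_order all_algebra.
From mathcomp Require Import zify.
Import Order.TTheory GRing.Theory Num.Theory.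
Local Open Scope ring_scope.

Lemma invmxMu n (A B : 'M[int]_n) : A \in unitmx -> B \in unitmx ->
  invmx (A *m B) = invmx B *m invmx A.
Proof.
move=> uA uB.
have uAB : A *m B \in unitmx by rewrite unitmx_mul uA.
have h : (A *m B) *m (invmx B *m invmx A) = 1%:M.
  by rewrite -mulmxA (mulKVmx uB) (mulmxV uA).
by rewrite -[LHS]mulmx1 -h mulmxA (mulVmx uAB) mul1mx.
Qed.

Lemma even_sum n (f : 'I_n -> int) :
  (forall i, (2 %| f i)%Z) -> (2 %| \sum_i f i)%Z.
Proof.
move=> h; apply: (big_ind (fun x => (2 %| x)%Z)).
- exact: dvdz0.
- move=> x y; lia.
- by move=> i _; apply: h.
Qed.

Lemma mxBE m k (A B : 'M[int]_(m, k)) i j : (A - B) i j = A i j - B i j.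
Proof. by rewrite !mxE. Qed.

Lemma mxDE m k (A B : 'M[int]_(m, k)) i j : (A + B) i j = A i j + B i j.
Proof. by rewrite !mxE. Qed.

Lemma cong_row m k p (X Y : 'M[int]_(m, k)) (M : 'M[int]_(k, p)) i :
  (forall j, (2 %| X i j - Y i j)%Z) ->
  forall l, (2 %| (X *m M) i l - (Y *m M) i l)%Z.
Proof.
move=> h l.
have -> : (X *m M) i l - (Y *m M) i l = ((X - Y) *m M) i l.
  by rewrite mulmxBl mxBE.
rewrite mxE; apply: even_sum => j.
rewrite mxBE.
exact: dvdz_mulr (h j).
Qed.

Lemma nat_mul2 x y : (x * y = 2)%N -> (x = 1 /\ y = 2 \/ x = 2 /\ y = 1)%N.
Proof.
move=> h.
have hle : (x <= 2)%N.
  rewrite -h; case: y h => [|y] h; first by rewrite muln0 in h.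
  by rewrite leq_pmulr.
case: x h hle => [|[|[|x]]] h hle; lia.
Qed.

Lemma smith_diag n (ds : seq int) : sorted dvdz ds ->
  `|\prod_(i < n.+1) ds`_i| = 2 ->
  (forall i : 'I_n.+1, i != ord_max -> `|ds`_i| = 1) /\ `|ds`_n| = 2.
Proof.
move=> sds; rewrite big_ord_recr /=.
set p := \prod_(i < n) _ => hp.
have nz : ds`_n != 0.
  by apply/eqP=> h; move: hp; rewrite h mulr0 normr0; lia.
have sz : (n < size ds)%N.
  rewrite ltnNge; apply/negP => hs; move: nz; by rewrite nth_default // eqxx.
have dvn : forall i, (i < n)%N -> (ds`_i %| ds`_n)%Z.
  move=> i hi; apply: (sorted_ltn_nth _ 0 sds) => //.
  - by move=> y x z; apply: dvdz_trans.
  - by rewrite inE (ltn_trans hi sz).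
have dvp : forall i, (i < n)%N -> (ds`_i %| p)%Z.
  move=> i hi; rewrite /p (bigD1 (Ordinal hi)) //=.
  exact: dvdz_mulr (dvdzz _).
have hpn : (`|p|%N * `|(ds`_n)%R|%N = 2)%N.
  rewrite -abszM; have := abszE (p * ds`_n)%R; rewrite hp; by case.
have toi : forall i : 'I_n.+1, i != ord_max -> (i < n)%N.
  move=> i; rewrite -(inj_eq val_inj) /= => hi; have := ltn_ord i; lia.
case/nat_mul2: hpn => [[h1 h2]|[h1 h2]].
- split; last by lia.
  move=> i /toi hi; have := dvp _ hi; rewrite dvdzE h1 dvdn1 => /eqP h; by rewrite -abszE h.
- exfalso.
  have hall : forall i : 'I_n, `|ds`_i| = 1.
    move=> i; have := dvn _ (ltn_ord i); rewrite dvdzE h2 dvdn1 => /eqP h; by rewrite -abszE h.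
  have : `|p| = 1 by rewrite /p normr_prod big1.
  lia.
Qed.

Lemma absz_eq (x : int) k : `|x| = Posz k -> `|x|%N = k.
Proof. by move=> h; have := abszE x; rewrite h; case. Qed.

Lemma inD n (r : 'rV[int]_n.+1) :
  (forall i : 'I_n.+1, i != ord_max -> `|r 0 i| = 1) -> `|r 0 ord_max| = 2 ->
  forall w : 'cV[int]_n.+1,
    (exists x, w = diag_mx r *m x) <-> (2 %| w ord_max ord0)%Z.
Proof.
move=> h1 h2 w; split.
- move=> [x ->]; rewrite mul_diag_mx mxE; apply: dvdz_mulr.
  by rewrite dvdzE (@absz_eq _ 2 h2).
- move=> hw; exists (\col_i (divz (w i 0) (r 0 i))).
  apply/matrixP => i j; rewrite mul_diag_mx !mxE (ord1 j) mulrC divzK //.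
  case: (eqVneq i ord_max) => [->|hi].
  + rewrite dvdzE; rewrite (@absz_eq _ 2 h2).
    by move: hw; rewrite dvdzE.
  + rewrite dvdzE; rewrite (@absz_eq _ 1 (h1 _ hi)).
    exact: dvd1n.
Qed.

Lemma latX n (r : 'rV[int]_n.+1) :
  (forall i : 'I_n.+1, i != ord_max -> `|r 0 i| = 1) -> `|r 0 ord_max| = 2 ->
  forall X Y : 'M[int]_n.+1, X \in unitmx -> Y \in unitmx ->
  forall v, inLat (X *m diag_mx r *m Y) v <->
            (2 %| (invmx X *m v) ord_max ord0)%Z.
Proof.
move=> h1 h2 X Y uX uY v; rewrite -(@inD _ _ h1 h2); split.
- move=> [x ->]; exists (Y *m x); by rewrite -!mulmxA (mulKmx uX).
- move=> [y hy]; exists (invmx Y *m y).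
  by rewrite -!mulmxA (mulKVmx uY) -hy (mulKVmx uX).
Qed.

Lemma unit_sq0 m (E : 'M[int]_m) : E *m E = 0 -> (1%:M + E) \in unitmx.
Proof.
move=> h; have [] := @mulmx1_unit _ _ (1%:M + E) (1%:M - E); last by [].
by rewrite mulmxDl !mulmxBr !mul1mx !mulmx1 h subr0 subrK.
Qed.

Definition eN n : 'cV[int]_n.+1 := delta_mx ord_max 0.
Definition Tmx {n} (al : 'rV[int]_n.+1) (be : 'cV[int]_n.+1) : 'M[int]_n.+1 :=
  1%:M + eN n *m al + be *m (eN n)^T.

Lemma Tgen n (al : 'rV[int]_n.+1) (be : 'cV[int]_n.+1) :
  al 0 ord_max = 0 -> be ord_max 0 = 0 -> al *m be = 0 ->
  Tmx al be \in unitmx /\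
  forall j, ((Tmx al be)^T *m Tmx al be) ord_max j =
    (j == ord_max)%:R + be j 0 + al 0 j + (be^T *m be) 0 0 * (j == ord_max)%:R.
Proof.
move=> hal hbe hab.
set e := eN n.
have hae : al *m e = 0.
  by rewrite /e /eN -colE; apply/matrixP => i j; rewrite !mxE (ord1 i).
have hee : e^T *m e = 1%:M.
  rewrite /e /eN trmx_delta mul_delta_mx; apply/matrixP => i j.
  by rewrite (ord1 i) (ord1 j) !mxE.
have heb : e^T *m be = 0.
  by rewrite /e /eN trmx_delta -rowE; apply/matrixP => i j; rewrite !mxE (ord1 j).
have hbe' : be^T *m e = 0.
  by rewrite -(trmxK (be^T *m e)) trmx_mul trmxK heb trmx0.
split.
- have -> : Tmx al be = (1%:M + e *m al) *m (1%:M + be *m e^T).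
    have h12 : (e *m al) *m (be *m e^T) = 0.
      by rewrite mulmxA -(mulmxA e) hab mulmx0 mul0mx.
    by rewrite mulmxDl !mulmxDr !mul1mx !mulmx1 h12 addr0 /Tmx -/e addrAC.
  rewrite unitmx_mul; apply/andP; split; apply: unit_sq0.
  + by rewrite mulmxA -(mulmxA e) hae mulmx0 mul0mx.
  + by rewrite mulmxA -(mulmxA be) heb mulmx0 mul0mx.
- move=> j.
  set T := Tmx al be.
  have hTe : T *m e = e + be.
    by rewrite /T /Tmx -/e !mulmxDl mul1mx -!mulmxA hae mulmx0 hee mulmx1 addr0.
  have -> : (T^T *m T) ord_max j = ((T *m e)^T *m T) 0 j.
    by rewrite trmx_mul -mulmxA /e /eN trmx_delta -rowE [in RHS]mxE.
  have htr : (e + be)^T = e^T + be^T by rewrite linearD.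
  rewrite hTe htr /T /Tmx -/e.
  rewrite !mulmxDl !mulmxDr !mulmx1.
  rewrite !mulmxA hee mul1mx hbe' mul0mx heb mul0mx.
  set c := be^T *m be.
  rewrite !addr0.
  have he1 : forall k, e^T k j = (j == ord_max)%:R.
    by move=> k; rewrite /e /eN !mxE (ord1 k) eqxx andbT.
  have hc : (c *m e^T) 0 j = c 0 0 * (j == ord_max)%:R.
    by rewrite mxE big_ord1 he1.
  have hb : be^T 0 j = be j 0 by rewrite mxE.
  rewrite !mxDE hc hb he1.
  by rewrite -!addrA; congr (_ + _); rewrite addrCA.
Qed.

Lemma o0 : (0 : 'I_1) = ord0.
Proof. exact: val_inj. Qed.

Lemma Texists n (a : 'rV[int]_n.+1) k : ~~ (2 %| a ord0 k)%Z ->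
  exists T : 'M[int]_n.+1, T \in unitmx /\
    forall j, (2 %| a ord0 j - (T^T *m T) ord_max j)%Z.
Proof.
move=> hk0.
case: (boolP (2 %| a ord0 ord_max)%Z) => haN.
- have hk : k != ord_max by apply: contraNneq hk0 => ->.
  pose al := \row_j (if (j == ord_max) || (j == k) then 0 else a 0 j) : 'rV[int]_n.+1.
  pose be := (delta_mx k 0 : 'cV[int]_n.+1).
  have h1 : al 0 ord_max = 0 by rewrite mxE eqxx.
  have h2 : be ord_max 0 = 0 by rewrite mxE eq_sym (negbTE hk).
  have h3 : al *m be = 0.
    by rewrite -colE; apply/matrixP => i j; rewrite !mxE eqxx orbT.
  have [uT hT] := @Tgen _ _ _ h1 h2 h3.
  exists (Tmx al be); split; first exact: uT.
  move=> j; rewrite hT.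
  have -> : (be^T *m be) 0 0 = 1 by rewrite trmx_delta mul_delta_mx mxE.
  rewrite !mxE.
  case: (eqVneq j ord_max) => [->|hjN].
  + rewrite eq_sym (negbTE hk) /=; move: haN; lia.
  + have [hjk|hjk] := eqVneq j k.
    * subst j; rewrite eqxx orbT /=; move: hk0; lia.
    * by rewrite /= o0; lia.
- pose al := \row_j (if j == ord_max then 0 else a 0 j) : 'rV[int]_n.+1.
  pose be := (0 : 'cV[int]_n.+1).
  have h1 : al 0 ord_max = 0 by rewrite mxE eqxx.
  have h2 : be ord_max 0 = 0 by rewrite mxE.
  have h3 : al *m be = 0 by rewrite mulmx0.
  have [uT hT] := @Tgen _ _ _ h1 h2 h3.
  exists (Tmx al be); split; first exact: uT.
  move=> j; rewrite hT.
  have -> : (be^T *m be) 0 0 = 0 by rewrite mulmx0 mxE.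
  rewrite !mxE.
  case: (eqVneq j ord_max) => [->|hjN] /=.
  + by move: haN; rewrite ?mulr1n ?mulr0n; lia.
  + by rewrite ?mulr1n ?mulr0n o0; lia.
Qed.

Lemma key1 n (A : 'M[int]_n) (v w : 'cV[int]_n) :
  (exists x, v = w + A *m x) <-> inLat A (v - w).
Proof.
split=> [[x ->]|[x hx]]; exists x.
- by rewrite addrC addKr.
- by rewrite -hx addrC subrK.
Qed.

Lemma key2 n (A : 'M[int]_n) (v w : 'cV[int]_n) :
  (exists x, v = w - A *m x) <-> inLat A (w - v).
Proof.
split=> [[x ->]|[x hx]]; exists x.
- by rewrite opprB addrC subrK.
- by rewrite -hx opprB addrC subrK.
Qed.

Theorem theorem4p1 (d : nat) (hd : (0 < d)%N) (B : 'M[int]_d)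
    (hB : `|\det B| = 2) :
  exists A : 'M[int]_d,
    int_similar B A /\
    (* (1) A Z^d = A^T Z^d *)
    (forall v : 'cV[int]_d, inLat A v <-> inLat A^T v) /\
    exists l : 'cV[int]_d,
      (* (2) Z^d = (l + A Z^d) disjoint-union A Z^d *)
      disj_cover (fun v => inLat A (v - l)) (fun v => inLat A v) /\
      (* (3) *)
      (exists q : 'cV[int]_d,
         (forall v, inLat A v -> (2 %| dotz q v)%Z) /\
         (forall v, inLat A (v - l) -> ~~ (2 %| dotz q v)%Z)) /\
      (* (4) *)
      (forall m n : 'cV[int]_d, inLat A m ->
         disj_cover (fun v => exists x, v = n - A *m x)
                    (fun v => exists x, v = l - m - n + A *m x)) /\
      (* (5) *)
      (forall m n : 'cV[int]_d, inLat A (m - l) ->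
         forall v : 'cV[int]_d,
           (exists x, v = n - A *m x) <-> (exists x, v = l - m - n + A *m x)).
Proof.
case: d hd B hB => [//|n] _ B hB.
have [P uP [Q uQ [ds sds eB]]] := int_Smith_normal_form B.
pose r := \row_(i < n.+1) ds`_i : 'rV[int]_n.+1.
have eD : \matrix_(i, j) (ds`_i *+ (i == j :> nat)) = diag_mx r :> 'M[int]_n.+1.
  by apply/matrixP => i j; rewrite !mxE.
rewrite eD in eB.
have hdet : `|\prod_(i < n.+1) ds`_i| = 2.
  move: hB; rewrite eB !det_mulmx det_diag.
  have hP : `|\det P| = 1 by move: uP; rewrite unitmxE; move: (\det P) => x; lia.
  have hQ : `|\det Q| = 1 by move: uQ; rewrite unitmxE; move: (\det Q) => x; lia.
  rewrite !normrM hP hQ mul1r mulr1.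
  by under eq_bigr do rewrite mxE.
have [hd1 hd2] := @smith_diag _ _ sds hdet.
have hr1 : forall i : 'I_n.+1, i != ord_max -> `|r 0 i| = 1.
  by move=> i hi; rewrite mxE; apply: hd1.
have hr2 : `|r 0 ord_max| = 2 by rewrite mxE.
pose U := Q *m P.
have uU : U \in unitmx by rewrite unitmx_mul uQ uP.
pose a := row ord_max (invmx U).
have [k hk] : exists k, ~~ (2 %| a ord0 k)%Z.
  have : [exists k, ~~ (2 %| a ord0 k)%Z]; last by case/existsP=> k hk; exists k.
  rewrite -negb_forall; apply/negP => /forallP hall.
  have := mulVmx uU; move/matrixP/(_ ord_max ord_max).
  rewrite !mxE eqxx /= => h.
  have : (2 %| \sum_j invmx U ord_max j * U j ord_max)%Z.
    apply: even_sum => j; apply: dvdz_mulr.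
    by have := hall j; rewrite mxE.
  by rewrite h.
have [T [uT hT]] := @Texists _ _ _ hk.
pose A := T *m U *m diag_mx r *m invmx T.
have uTU : T *m U \in unitmx by rewrite unitmx_mul uT uU.
pose phi (v : 'cV[int]_n.+1) : int := (invmx (T *m U) *m v) ord_max ord0.
have hA : forall v, inLat A v <-> (2 %| phi v)%Z.
  by move=> v; apply: (@latX _ _ hr1 hr2 _ _ uTU); rewrite unitmx_inv.
have eAT : A^T = (invmx T)^T *m diag_mx r *m (T *m U)^T.
  by rewrite /A !trmx_mul tr_diag_mx !mulmxA.
have hAT : forall v, inLat A^T v <-> (2 %| (T^T *m v) ord_max ord0)%Z.
  move=> v; rewrite eAT (@latX _ _ hr1 hr2).
  - by rewrite trmx_inv invmxK.
  - by rewrite unitmx_tr unitmx_inv.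
  - by rewrite unitmx_tr.
have hpar : forall v, (2 %| phi v - (T^T *m v) ord_max ord0)%Z.
  move=> v; rewrite /phi invmxMu //.
  have h1 := @cong_row _ _ _ (invmx U) (T^T *m T) (invmx T) ord_max.
  rewrite (mulmxK uT) in h1.
  have := @cong_row _ _ _ (invmx U *m invmx T) T^T v ord_max.
  apply; apply: h1 => j.
  by have := hT j; rewrite mxE.
have phiB : forall v w, phi (v - w) = phi v - phi w.
  by move=> v w; rewrite /phi mulmxBr mxBE.
have phiD : forall v w, phi (v + w) = phi v + phi w.
  by move=> v w; rewrite /phi mulmxDr mxDE.
pose l := (T *m U) *m eN n.
have phil : phi l = 1 by rewrite /phi /l (mulKmx uTU) /eN mxE !eqxx.
exists A; split.
  exists (T *m Q); split; first by rewrite unitmx_mul uT uQ.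
  by rewrite eB invmxMu // /A /U !mulmxA (mulmxK uQ).
split.
  move=> v; rewrite hA hAT; have := hpar v; lia.
exists l; split.
  move=> v; rewrite !hA phiB phil; lia.
split.
  exists (row ord_max (invmx (T *m U)))^T.
  have hq : forall v, dotz (row ord_max (invmx (T *m U)))^T v = phi v.
    move=> v; rewrite /dotz /phi [RHS]mxE; apply: eq_bigr => j _.
    by rewrite !mxE.
  split=> v; rewrite hq.
    by rewrite hA.
  by rewrite hA phiB phil; lia.
split.
  move=> m n' /hA hm v.
  rewrite key2 key1 !hA !phiB !phil; move: hm; lia.
move=> m n' /hA hm v.
rewrite key2 key1 !hA !phiB !phil; move: hm; rewrite phiB phil; lia.
Qed.
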